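(* Let $x_1,x_2,x_3>0$, $\gamma,\delta>0$ with $\gamma\ne1\ne\delta$, and let $$\mathbf{Q}=\begin{pmatrix}1&\delta x_1&x_2&x_3\\ 1/(\delta x_1)&1&x_2/x_1&x_3/x_1\\ 1/x_2&x_1/x_2&1&\gamma x_3/x_2\\ 1/x_3&x_1/x_3&x_2/(\gamma x_3)&1\end{pmatrix}$$ with principal right eigenvector $\mathbf{w}^{EM}$. If $\delta,\gamma<1$, then $w_2^{EM}/w_3^{EM}>x_2/x_1$.
   Context: The principal right eigenvector is the positive (Perron) eigenvector belonging to the largest eigenvalue. *)

(* Defs.v *)
From HB Require Import structures.
From mathcomp Require Import all_boot all_order all_algebra.
From mathcomp Require Import reals.
Set Implicit Arguments. Unset Strict Implicit. Unset Printing Implicit Defensive.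
Import Order.TTheory GRing.Theory Num.Theory.
Local Open Scope ring_scope.

(* Entries of the 4x4 matrix Q, indexed from 0 (paper index minus one). *)
Definition Q_entry (R : fieldType) (x1 x2 x3 g d : R) (i j : nat) : R :=
  match i%N, j%N with
  | 0%N, 0%N => 1 | 0, 1 => d * x1 | 0, 2 => x2 | 0, 3 => x3
  | 1, 0 => (d * x1)^-1 | 1, 1 => 1 | 1, 2 => x2 / x1 | 1, 3 => x3 / x1
  | 2, 0 => x2^-1 | 2, 1 => x1 / x2 | 2, 2 => 1 | 2, 3 => g * x3 / x2
  | 3, 0 => x3^-1 | 3, 1 => x1 / x3 | 3, 2 => x2 / (g * x3) | _, _ => 1
  end.

Definition Qmx (R : fieldType) (x1 x2 x3 g d : R) : 'M[R]_4 :=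
  \matrix_(i < 4, j < 4) Q_entry x1 x2 x3 g d i j.

Definition principal_right_eigenvector (R : realFieldType) (n : nat)
  (A : 'M[R]_n) (w : 'cV[R]_n) : Prop :=
  (forall i, 0 < w i 0) /\
  exists lambda : R,
    A *m w = lambda *: w /\ (forall mu : R, eigenvalue A mu -> mu <= lambda).

(* Main.v *)
Require Import Defs.
From HB Require Import structures.
From mathcomp Require Import all_boot all_order all_algebra.
From mathcomp Require Import reals.
From mathcomp Require Import ring lra.
Import Order.TTheory GRing.Theory Num.Theory.
Local Open Scope ring_scope.

Lemma sum4 (R : realType) (F : 'I_4 -> R) :
  \sum_(j < 4) F j = F (inord 0) + F (inord 1) + F (inord 2) + F (inord 3).
Proof.
rewrite !big_ord_recl big_ord0 addr0 !addrA.
have E : forall (k : 'I_4) (n : nat), val k = n -> k = inord n.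
  by move=> k n h; apply/val_inj; rewrite /= inordK -h ?ltn_ord.
congr (_ + _ + _ + _); congr F; apply: E => //.
Qed.

Lemma rowE (R : realType) (x1 x2 x3 g d : R) (w : 'cV[R]_4) (i : nat) : (i < 4)%N ->
  (Qmx x1 x2 x3 g d *m w) (inord i) 0 =
  Q_entry x1 x2 x3 g d i 0 * w (inord 0) 0 + Q_entry x1 x2 x3 g d i 1 * w (inord 1) 0 +
  Q_entry x1 x2 x3 g d i 2 * w (inord 2) 0 + Q_entry x1 x2 x3 g d i 3 * w (inord 3) 0.
Proof.
move=> hi; rewrite mxE sum4 !mxE !inordK //.
Qed.

Theorem mainTheorem14 (R : realType) (x1 x2 x3 g d : R) (w : 'cV[R]_4) :
  0 < x1 -> 0 < x2 -> 0 < x3 -> 0 < g -> 0 < d -> g != 1 -> d != 1 ->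
  principal_right_eigenvector (Qmx x1 x2 x3 g d) w ->
  d < 1 -> g < 1 ->
  x2 / x1 < w (inord 1) 0 / w (inord 2) 0.
Proof.
move=> h1 h2 h3 hg hd _ _ [wpos [l [Ew _]]] dl gl.
have e0 := @rowE R x1 x2 x3 g d w 0 isT.
have e1 := @rowE R x1 x2 x3 g d w 1 isT.
have e2 := @rowE R x1 x2 x3 g d w 2 isT.
rewrite Ew mxE in e0; rewrite Ew mxE in e1; rewrite Ew mxE in e2.
rewrite /Q_entry /= in e0 e1 e2.
have p0 := wpos (inord 0); have p1 := wpos (inord 1); have p2 := wpos (inord 2); have p3 := wpos (inord 3).
move: e0 e1 e2 p0 p1 p2 p3.
set a := w (inord 0) 0; set b := w (inord 1) 0; set c := w (inord 2) 0; set e := w (inord 3) 0.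
move=> e0 e1 e2 p0 p1 p2 p3.
have lpos : 0 < l.
  have q1 : 0 < d * x1 * b by rewrite !mulr_gt0.
  have q2 : 0 < x2 * c by rewrite mulr_gt0.
  have q3 : 0 < x3 * e by rewrite mulr_gt0.
  have : 0 < l * a by rewrite e0; lra.
  by rewrite pmulr_lgt0.
have e1' : l * (x1 * b) = a / d + x1 * b + x2 * c + x3 * e.
  rewrite mulrCA e1; field; by rewrite ?gt_eqF.
have e2' : l * (x2 * c) = a + x1 * b + x2 * c + g * x3 * e.
  rewrite mulrCA e2; field; by rewrite ?gt_eqF.
have ad : a < a / d.
  by rewrite ltr_pdivlMr // ; nra.
have key : x2 * c < x1 * b.
  have q3 : 0 < x3 * e by rewrite mulr_gt0.
  have : 0 < l * (x1 * b - x2 * c).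
    rewrite mulrBr e1' e2'; nra.
  by rewrite pmulr_rgt0 // subr_gt0.
by rewrite ltr_pdivlMr // mulrAC ltr_pdivrMr // [b * _]mulrC.
Qed.
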